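(* Let $G$ be a graph with $n$ vertices, $m$ edges, and maximum degree at most $\Delta$, where $\Delta$ is a positive integer, and let $I=\{1,\ldots,\Delta\}$. Suppose $x\in\mathbb{R}_{\geq 0}$, $y\in\mathbb{R}$ and $z_i\in\mathbb{R}_{\geq 0}$ for $i\in I$ satisfy $z_i+z_j\geq j-i$ for all $i,j\in I$ with $i<j$, and $x+iy\geq iz_i$ for all $i\in I$. Then $irr(G)\leq nx+2my$.
   Context: All graphs are finite, simple and undirected. For a graph $G$ with edge set $E(G)$ and vertex degrees $d_G(u)$, the irregularity (in the sense of Albertson) is $irr(G)=\sum_{uv\in E(G)}|d_G(u)-d_G(v)|$. *)

(* Defs.v *)
From mathcomp Require Import all_boot all_order all_algebra.
Set Implicit Arguments. Unset Strict Implicit. Unset Printing Implicit Defensive.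
Import Order.TTheory GRing.Theory Num.Theory.

Definition simple_graph (T : finType) (e : rel T) : Prop :=
  irreflexive e /\ symmetric e.

Definition deg (T : finType) (e : rel T) (u : T) : nat := #|[set v | e u v]|.

(* Each undirected edge uv is represented once, as the ordered pair (u,v)
   with enum_rank u < enum_rank v. *)
Definition edges (T : finType) (e : rel T) : {set T * T} :=
  [set p | e p.1 p.2 && (enum_rank p.1 < enum_rank p.2)%N].

Definition nedges (T : finType) (e : rel T) : nat := #|edges e|.

Definition irr (R : numDomainType) (T : finType) (e : rel T) : R :=
  \sum_(p in edges e) `|(deg e p.1)%:R - (deg e p.2)%:R| .

(* Main.v *)
Require Import Defs.
From mathcomp Require Import all_boot all_order all_algebra.
Import Order.TTheory GRing.Theory Num.Theory.
Local Open Scope ring_scope.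

Lemma handshake (R : numDomainType) (T : finType) (e : rel T) (f : T -> R) :
  simple_graph e ->
  \sum_(p in edges e) (f p.1 + f p.2) = \sum_u (deg e u)%:R * f u.
Proof.
case=> irr sym.
set r := fun u : T => enum_rank u.
have -> : \sum_u (deg e u)%:R * f u = \sum_(p | e p.1 p.2) f p.1.
  rewrite -(pair_big_dep xpredT (fun u v => e u v) (fun u _ => f u)).
  apply: eq_bigr => u _; rewrite sumr_const mulr_natl /deg cardsE; congr (_ *+ _).
rewrite big_split /= [RHS](bigID (fun p => (r p.1 < r p.2)%N)) /=.
congr (_ + _).
  by apply: eq_bigl => p; rewrite /edges inE.
rewrite (reindex_inj (h := fun p : T * T => (p.2, p.1))); last first.
  by move=> [a b] [c d] /= [-> ->].
apply: eq_bigl => [[u v]] /=; rewrite /edges inE /=.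
rewrite (sym v u); case euv: (e u v) => //=.
have nuv : u != v by apply/eqP => E; rewrite E irr in euv.
have : r u != r v by apply: contra nuv => /eqP /enum_rank_inj ->.
rewrite neq_ltn; case/orP => H.
  by rewrite H ltnNge ltnW.
by rewrite H ltnNge ltnW // ?H.
Qed.

Theorem mainTheorem5 (R : realFieldType) (T : finType) (e : rel T)
  (Delta : nat) (x y : R) (z : nat -> R) :
  simple_graph e ->
  (0 < Delta)%N ->
  (forall u : T, (deg e u <= Delta)%N) ->
  0 <= x ->
  (forall i : nat, (1 <= i <= Delta)%N -> 0 <= z i) ->
  (forall i j : nat, (1 <= i)%N -> (i < j)%N -> (j <= Delta)%N ->
     z i + z j >= j%:R - i%:R) ->
  (forall i : nat, (1 <= i <= Delta)%N -> x + i%:R * y >= i%:R * z i) ->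
  irr R e <= #|T|%:R * x + 2 * (nedges e)%:R * y.
Proof.
move=> G D0 Hdeg x0 z0 Hz Hx.
have degpos : forall u v, e u v -> (1 <= deg e u)%N.
  move=> u v euv; rewrite /deg card_gt0; apply/set0Pn; exists v; by rewrite inE.
have step1 : irr R e <= \sum_(p in edges e) (z (deg e p.1) + z (deg e p.2)).
  rewrite /irr; apply: ler_sum => p; rewrite /edges inE => /andP [ep _].
  have e21 : e p.2 p.1 by case: G => _ sym; rewrite sym.
  have h1 := degpos _ _ ep; have h2 := degpos _ _ e21.
  have b1 := Hdeg p.1; have b2 := Hdeg p.2.
  case: (ltngtP (deg e p.1) (deg e p.2)) => H.
  - rewrite distrC ger0_norm; first by apply: Hz.
    by rewrite subr_ge0 ler_nat ltnW.
  - rewrite ger0_norm; last by rewrite subr_ge0 ler_nat ltnW.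
    by rewrite [z _ + _]addrC; apply: Hz.
  - rewrite -H subrr normr0; apply: addr_ge0; apply: z0; apply/andP; split => //.
apply: (le_trans step1); rewrite (@handshake R T e (fun u => z (deg e u)) G).
have hs1 := @handshake R T e (fun _ => (1 : R)) G.
have -> : 2 * (nedges e)%:R = \sum_u (deg e u)%:R * (1 : R).
  rewrite -hs1 /= sumr_const /nedges.
  by rewrite -[in RHS]mulr_natr.
rewrite big_distrl /= -sum1_card natr_sum big_distrl -big_split /=.
apply: ler_sum => u _; rewrite mul1r mulr1.
case: (posnP (deg e u)) => H.
  by rewrite H mul0r mul0r addr0.
by apply: Hx; rewrite H Hdeg.
Qed.
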